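(* Let $\mathscr{H}$ be a complex Hilbert space and $A\in\mathbb{B}(\mathscr{H})$. Then for every $\mu\in[0,2]$, $$w^2(A)\leq\frac{1}{4}\left\|\mu|A|^2+(2-\mu)|A^*|^2\right\|+\frac{1}{8}\left\||A|^2+|A^*|^2\right\|+\frac{1}{4}\,w(A^2).$$
   Context: $\mathbb{B}(\mathscr{H})$ denotes the algebra of bounded linear operators on $\mathscr{H}$; $\|\cdot\|$ is the operator norm. For $T\in\mathbb{B}(\mathscr{H})$, $|T|=(T^*T)^{1/2}$, and $w(T)=\sup\{|\langle Tx,x\rangle|: \|x\|=1\}$ is the numerical radius. *)

(* Defs.v *)
(* A complex Hilbert space is an lmodType over C with an
   inner product (linear in the first argument) that is complete for the induced norm. *)
From HB Require Import structures.
From mathcomp Require Import all_boot all_order all_algebra.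
From mathcomp Require Import complex.
From mathcomp Require Import boolp classical_sets reals.
Set Implicit Arguments. Unset Strict Implicit. Unset Printing Implicit Defensive.
Import Order.TTheory GRing.Theory Num.Theory.
Local Open Scope ring_scope.
Local Open Scope complex_scope.

Section Hilbert.
Variable R : realType.
Local Notation C := (complex R).
Variable H : lmodType C.
Variable ip : H -> H -> C.

Definition is_inner_product : Prop :=
  [/\ forall (a : C) (x y z : H), ip (a *: x + y) z = a * ip x z + ip y z,
      forall x y : H, ip y x = (ip x y)^*,
      forall x : H, 0 <= ip x x
    & forall x : H, ip x x = 0 -> x = 0].

Definition hnorm (x : H) : R := Num.sqrt (complex.Re (ip x x)).

Definition cabs (z : C) : R := Num.sqrt (complex.Re z ^+ 2 + complex.Im z ^+ 2).

Definition hcauchy (u : nat -> H) : Prop :=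
  forall e : R, 0 < e -> exists N : nat, forall m n : nat,
    (N <= m)%N -> (N <= n)%N -> hnorm (u m - u n) < e.

Definition hconverges (u : nat -> H) : Prop :=
  exists l : H, forall e : R, 0 < e -> exists N : nat, forall n : nat,
    (N <= n)%N -> hnorm (u n - l) < e.

Definition hcomplete : Prop := forall u : nat -> H, hcauchy u -> hconverges u.

Definition is_hilbert_space : Prop := is_inner_product /\ hcomplete.

Definition bounded_op (T : H -> H) : Prop :=
  exists M : R, forall x : H, hnorm (T x) <= M * hnorm x.

Definition is_adjoint (T T' : H -> H) : Prop :=
  forall x y : H, ip (T x) y = ip x (T' y).

Definition opnorm (T : H -> H) : R :=
  sup [set r : R | exists x : H, hnorm x = 1 /\ r = hnorm (T x)].

Definition numrad (T : H -> H) : R :=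
  sup [set r : R | exists x : H, hnorm x = 1 /\ r = cabs (ip (T x) x)].

End Hilbert.

(* Main.v *)
Require Import Defs.
From HB Require Import structures.
From mathcomp Require Import all_boot all_order all_algebra.
From mathcomp Require Import complex.
From mathcomp Require Import boolp classical_sets reals.
From mathcomp Require Import lra ring.
Set Implicit Arguments.
Import Order.TTheory GRing.Theory Num.Theory.
Local Open Scope ring_scope.
Local Open Scope complex_scope.
Notation Rc := complex.Re.
Notation Ic := complex.Im.

Lemma reJ (R : realType) (z : complex R) : Rc (z * conjc z) = Rc z ^+ 2 + Ic z ^+ 2.
Proof. case: z => a b /=. rewrite !expr2. lra. Qed.

Lemma ReJ (R : realType) (z : complex R) : Rc (conjc z) = Rc z.
Proof. by case: z. Qed.

Lemma ReRM (R : realType) (k : R) (z : complex R) : Rc (k%:C * z) = k * Rc z.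
Proof. case: z => a b /=. lra. Qed.

Lemma sqJ (R : realType) (z : complex R) : Rc (conjc z) ^+ 2 + Ic (conjc z) ^+ 2 = Rc z ^+ 2 + Ic z ^+ 2.
Proof. case: z => a b /=. lra. Qed.

Lemma ip0l (R : realType) (H : lmodType R[i]) (ip : H -> H -> R[i])
  (hip : is_inner_product ip) z : ip 0 z = 0.
Proof.
case: hip => h1 _ _ _.
have := h1 1 0 0 z. rewrite scale1r addr0 mul1r -{1}(addr0 (ip 0 z)).
by move/addrI.
Qed.

Lemma ipDl (R : realType) (H : lmodType R[i]) (ip : H -> H -> R[i])
  (hip : is_inner_product ip) x y z : ip (x + y) z = ip x z + ip y z.
Proof. case: hip => h1 _ _ _. by rewrite -[x]scale1r h1 mul1r scale1r. Qed.

Lemma ipZl (R : realType) (H : lmodType R[i]) (ip : H -> H -> R[i])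
  (hip : is_inner_product ip) a x z : ip (a *: x) z = a * ip x z.
Proof.
have := hip; case=> h1 _ _ _. by rewrite -[a *: x]addr0 h1 (ip0l hip) addr0.
Qed.

Lemma ipJ (R : realType) (H : lmodType R[i]) (ip : H -> H -> R[i])
  (hip : is_inner_product ip) x y : ip y x = conjc (ip x y).
Proof. by case: hip. Qed.

Lemma ipDr (R : realType) (H : lmodType R[i]) (ip : H -> H -> R[i])
  (hip : is_inner_product ip) x y z : ip z (x + y) = ip z x + ip z y.
Proof. by rewrite !(ipJ hip _ z) (ipDl hip) rmorphD. Qed.

Lemma ipZr (R : realType) (H : lmodType R[i]) (ip : H -> H -> R[i])
  (hip : is_inner_product ip) a x z : ip z (a *: x) = conjc a * ip z x.
Proof. by rewrite !(ipJ hip _ z) (ipZl hip) rmorphM. Qed.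

Lemma ipNl (R : realType) (H : lmodType R[i]) (ip : H -> H -> R[i])
  (hip : is_inner_product ip) x z : ip (- x) z = - ip x z.
Proof. by rewrite -scaleN1r (ipZl hip) mulN1r. Qed.

Lemma ipNr (R : realType) (H : lmodType R[i]) (ip : H -> H -> R[i])
  (hip : is_inner_product ip) x z : ip z (- x) = - ip z x.
Proof. by rewrite !(ipJ hip _ z) (ipNl hip) rmorphN. Qed.

Lemma ipxx (R : realType) (H : lmodType R[i]) (ip : H -> H -> R[i])
  (hip : is_inner_product ip) x : ip x x = (Rc (ip x x))%:C /\ 0 <= Rc (ip x x).
Proof.
case: hip => _ _ h3 _. have := h3 x. case: (ip x x) => a b.
rewrite lecE /=. case/andP => /eqP -> a0. by split.
Qed.

Lemma hnorm_sq (R : realType) (H : lmodType R[i]) (ip : H -> H -> R[i])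
  (hip : is_inner_product ip) x : hnorm ip x ^+ 2 = Rc (ip x x).
Proof. by rewrite /hnorm sqr_sqrtr //; case: (ipxx hip x). Qed.

Lemma hnorm_ge0 (R : realType) (H : lmodType R[i]) (ip : H -> H -> R[i]) x :
  0 <= hnorm ip x.
Proof. exact: sqrtr_ge0. Qed.

Lemma ip0r (R : realType) (H : lmodType R[i]) (ip : H -> H -> R[i])
  (hip : is_inner_product ip) z : ip z 0 = 0.
Proof. by rewrite (ipJ hip) (ip0l hip) conjc0. Qed.

Lemma CS (R : realType) (H : lmodType R[i]) (ip : H -> H -> R[i])
  (hip : is_inner_product ip) x y :
  Rc (ip y x) ^+ 2 + Ic (ip y x) ^+ 2 <= Rc (ip y y) * Rc (ip x x).
Proof.
set r := Rc (ip x x); set c := ip y x.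
have [exx r0] := ipxx hip x.
have [eyy y0] := ipxx hip y.
set v := r%:C *: y - c *: x.
have E : ip v v = r%:C * (r%:C * ip y y - c * conjc c).
  have rJ : conjc r%:C = r%:C by rewrite /= oppr0.
  rewrite /v (ipDl hip) (ipNl hip) !(ipZl hip) !(ipDr hip) !(ipNr hip) !(ipZr hip).
  rewrite rJ (ipJ hip y x) -/c exx -/r. ring.
have := (ipxx hip v).2. rewrite E ReRM raddfB /= ReRM reJ.
have [r00|rpos] := eqVneq r 0.
  have x0 : x = 0.
    have := hip; case=> _ _ _ h4. apply: h4. by rewrite exx -/r r00.
  rewrite r00 /c x0 (ip0r hip) /= expr0n /=. lra.
have rp : 0 < r by rewrite lt_def rpos r0.
move=> h. rewrite -subr_ge0. 
have : 0 <= r * (r * Rc (ip y y) - (Rc c ^+ 2 + Ic c ^+ 2)) by [].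
rewrite pmulr_rge0 //. nra.
Qed.

Lemma le_of_sq (R : realType) (X Y : R) : 0 <= Y -> X ^+ 2 <= Y ^+ 2 -> X <= Y.
Proof. move=> y0 h. rewrite !expr2 in h. nra. Qed.

Lemma cabs_ge0 (R : realType) (z : R[i]) : 0 <= cabs z.
Proof. exact: sqrtr_ge0. Qed.

Lemma cabs_sq (R : realType) (z : R[i]) : cabs z ^+ 2 = Rc z ^+ 2 + Ic z ^+ 2.
Proof. by rewrite /cabs sqr_sqrtr // addr_ge0 // sqr_ge0. Qed.

Lemma Re_le_cabs (R : realType) (z : R[i]) : Rc z <= cabs z.
Proof. apply: le_of_sq; first exact: cabs_ge0. rewrite cabs_sq. have := sqr_ge0 (Ic z). lra. Qed.

Lemma cabs_ip_le (R : realType) (H : lmodType R[i]) (ip : H -> H -> R[i])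
  (hip : is_inner_product ip) x y : cabs (ip y x) <= hnorm ip y * hnorm ip x.
Proof.
apply: le_of_sq; first by rewrite mulr_ge0 // hnorm_ge0.
by rewrite cabs_sq exprMn !(hnorm_sq hip) (CS hip).
Qed.

Lemma Re_ip_le (R : realType) (H : lmodType R[i]) (ip : H -> H -> R[i])
  (hip : is_inner_product ip) x y : Rc (ip y x) <= hnorm ip y * hnorm ip x.
Proof. apply: le_trans (cabs_ip_le hip x y). exact: Re_le_cabs. Qed.

Lemma hnorm_tri (R : realType) (H : lmodType R[i]) (ip : H -> H -> R[i])
  (hip : is_inner_product ip) u v : hnorm ip (u + v) <= hnorm ip u + hnorm ip v.
Proof.
apply: le_of_sq; first by rewrite addr_ge0 // hnorm_ge0.
rewrite (hnorm_sq hip) (ipDl hip) !(ipDr hip) !raddfD /= (ipJ hip u v) ReJ.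
have := Re_ip_le hip v u. rewrite -!(hnorm_sq hip). rewrite !expr2. lra.
Qed.

Lemma hnorm_scale (R : realType) (H : lmodType R[i]) (ip : H -> H -> R[i])
  (hip : is_inner_product ip) (k : R) u : 0 <= k -> hnorm ip (k%:C *: u) = k * hnorm ip u.
Proof.
move=> k0. apply/le_anti/andP; split; apply: le_of_sq; rewrite ?mulr_ge0 ?hnorm_ge0 //;
rewrite exprMn !(hnorm_sq hip) (ipZl hip) (ipZr hip);
have -> : conjc k%:C = k%:C by rewrite /= oppr0.
all: by rewrite mulrA -rmorphM ReRM expr2.
Qed.

Lemma adj_bound (R : realType) (H : lmodType R[i]) (ip : H -> H -> R[i])
  (hip : is_inner_product ip) (A Astar : H -> H) (K : R) :
  0 <= K -> (forall x, hnorm ip (A x) <= K * hnorm ip x) -> is_adjoint ip A Astar ->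
  forall y, hnorm ip (Astar y) <= K * hnorm ip y.
Proof.
move=> K0 hA hadj y.
have h1 : hnorm ip (Astar y) ^+ 2 <= K * hnorm ip (Astar y) * hnorm ip y.
  rewrite (hnorm_sq hip) -hadj. apply: le_trans (Re_ip_le hip _ _) _.
  apply: ler_wpM2r; [exact: hnorm_ge0 | exact: hA].
have b0 := hnorm_ge0 _ ip y. have Kb := mulr_ge0 K0 b0.
have := hnorm_ge0 _ ip (Astar y). rewrite le_eqVlt => /orP[/eqP <-|apos]; first by [].
rewrite expr2 -mulrA mulrC [K * _]mulrC in h1. nra.
Qed.

Lemma unit_ip (R : realType) (H : lmodType R[i]) (ip : H -> H -> R[i])
  (hip : is_inner_product ip) x : hnorm ip x = 1 -> ip x x = 1.
Proof.
move=> hx. have := hnorm_sq hip x. rewrite hx expr1n => e.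
by rewrite (ipxx hip x).1 -e.
Qed.

Lemma sqrt_bound (R : realType) (X Y Z : R) : 0 <= Y -> 0 <= Z ->
  X ^+ 2 <= Y ^+ 2 * Z -> X <= Y * Num.sqrt Z.
Proof.
move=> y0 z0 h. apply: le_of_sq; first by rewrite mulr_ge0 // sqrtr_ge0.
by rewrite exprMn sqr_sqrtr.
Qed.

Lemma pointwise (R : realType) (H : lmodType R[i]) (ip : H -> H -> R[i])
  (hip : is_inner_product ip) (A Astar : H -> H) (hadj : is_adjoint ip A Astar)
  (mu : R) (hmu0 : 0 <= mu) (hmu2 : mu <= 2) x (hx : hnorm ip x = 1) :
  cabs (ip (A x) x) ^+ 2 <=
    4^-1 * Rc (ip ((mu%:C : R[i]) *: Astar (A x) + ((2 - mu)%:C : R[i]) *: A (Astar x)) x)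
  + 8^-1 * Rc (ip (Astar (A x) + A (Astar x)) x)
  + 4^-1 * cabs (ip (A (A x)) x).
Proof.
have ex1 := unit_ip hip x hx.
have X1 : Rc (ip x x) = 1 by rewrite ex1.
set a := ip (A x) x. set b := ip (A (A x)) x.
set P := Rc (ip (A x) (A x)). set Q := Rc (ip (Astar x) (Astar x)).
have P0 : 0 <= P by case: (ipxx hip (A x)).
have Q0 : 0 <= Q by case: (ipxx hip (Astar x)).
have eP : ip (A x) (A x) = P%:C by case: (ipxx hip (A x)).
have eQ : ip (Astar x) (Astar x) = Q%:C by case: (ipxx hip (Astar x)).
have hAA : Rc (ip (Astar (A x)) x) = P.
  by rewrite (ipJ hip) -hadj ReJ.
have hAA' : Rc (ip (A (Astar x)) x) = Q by rewrite hadj.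
have ea : a = conjc (ip (Astar x) x) by rewrite /a hadj (ipJ hip).
have eb : ip (A x) (Astar x) = b by rewrite /b (hadj (A x) x).
have hM : Rc (ip ((mu%:C : R[i]) *: Astar (A x) + ((2 - mu)%:C : R[i]) *: A (Astar x)) x)
    = mu * P + (2 - mu) * Q.
  by rewrite (ipDl hip) !(ipZl hip) raddfD /= !ReRM hAA hAA'.
have hN : Rc (ip (Astar (A x) + A (Astar x)) x) = P + Q.
  by rewrite (ipDl hip) raddfD /= hAA hAA'.
rewrite hM hN cabs_sq.
have hB1 : Rc a ^+ 2 + Ic a ^+ 2 <= P.
  by have := CS hip x (A x); rewrite X1 mulr1.
have hB2 : Rc a ^+ 2 + Ic a ^+ 2 <= Q.
  by have := CS hip x (Astar x); rewrite X1 mulr1 -sqJ -ea.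
set y := conjc a *: A x + a *: Astar x.
have ey : ip y x = conjc a * a + a * conjc a.
  by rewrite /y (ipDl hip) !(ipZl hip) -/a ea conjcK.
have eyy : ip y y = conjc a * a * P%:C + conjc a * conjc a * b
                   + a * a * conjc b + a * conjc a * Q%:C.
  rewrite /y !(ipDl hip) !(ipZl hip) !(ipDr hip) !(ipZr hip) conjcK eP eQ eb.
  rewrite (ipJ hip (A x) (Astar x)) eb. ring.
have hK := CS hip x y. rewrite X1 mulr1 ey eyy in hK.
set t := Rc a ^+ 2 + Ic a ^+ 2.
have t0 : 0 <= t by rewrite /t addr_ge0 // sqr_ge0.
have hcross : Rc (conjc a * conjc a * b) <= t * cabs b.
  rewrite /t /cabs. apply: sqrt_bound; rewrite ?addr_ge0 ?sqr_ge0 //.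
  case: (a) => p q; case: (b) => r s /=.
  have := sqr_ge0 ((p^+2 - q^+2) * s - 2 * p * q * r). rewrite !expr2. nra.
have hK' : 4 * t ^+ 2 <= t * P + t * Q + 2 * (t * cabs b).
  move: hK hcross. rewrite /t.
  case: (a) => p q; case: (b) => r s /=. rewrite /cabs /=. 
  set w := Num.sqrt _. move=> h1 h2. rewrite !expr2 in h1 h2 *. nra.
have cb0 := @cabs_ge0 R b.
have [t00|tpos] := eqVneq t 0.
  rewrite t00. nra.
have tp : 0 < t by rewrite lt_def tpos t0.
have hK2 : 4 * t <= P + Q + 2 * cabs b.
  rewrite expr2 in hK'. nra.
have m1 : mu * t <= mu * P by rewrite ler_wpM2l.
have m2 : (2 - mu) * t <= (2 - mu) * Q by rewrite ler_wpM2l // subr_ge0.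
lra.
Qed.

Lemma sup_ge0' (R : realType) (E : set R) : (forall r, E r -> 0 <= r) -> 0 <= sup E.
Proof.
move=> h. case: (pselect (has_sup E)) => [hs|hs]; last by rewrite sup_out.
case: (hs) => [[e Ee] hub]. apply: le_trans (h e Ee) _. exact: ub_le_sup.
Qed.

Lemma le_sup' (R : realType) (E : set R) (B r : R) :
  (forall s, E s -> s <= B) -> E r -> r <= sup E.
Proof. move=> hB Er. apply: ub_le_sup => //. by exists B => s /hB. Qed.

Local Close Scope complex_scope.
Unset Implicit Arguments.

Theorem mainTheorem4 (R : realType) (H : lmodType (complex R))
  (ip : H -> H -> complex R) (hH : is_hilbert_space ip)
  (A : {linear H -> H}) (hA : bounded_op ip A)
  (Astar : H -> H) (hAstar : is_adjoint ip A Astar)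
  (mu : R) (hmu0 : 0 <= mu) (hmu2 : mu <= 2) :
  numrad ip A ^+ 2 <=
    4^-1 * opnorm ip (fun x => ((mu%:C)%C : complex R) *: Astar (A x)
                               + (((2 - mu)%:C)%C : complex R) *: A (Astar x))
    + 8^-1 * opnorm ip (fun x => Astar (A x) + A (Astar x))
    + 4^-1 * numrad ip (fun x => A (A x)).
Proof.
have hip := hH.1.
case: hA => M hM.
set K := `|M|.
have K0 : 0 <= K by exact: normr_ge0.
have hK : forall x, hnorm ip (A x) <= K * hnorm ip x.
  move=> x. apply: le_trans (hM x) _. apply: ler_wpM2r; [exact: hnorm_ge0|exact: ler_norm].
have hKs := adj_bound hip K K0 hK hAstar.
set T1 := (fun x => _ *: Astar (A x) + _).
set T2 := (fun x => Astar (A x) + A (Astar x)).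
set o1 := opnorm ip T1. set o2 := opnorm ip T2. set n2 := numrad ip (fun x => A (A x)).
have b1 : forall x, hnorm ip x = 1 -> hnorm ip (T1 x) <= mu * (K * K) + (2 - mu) * (K * K).
  move=> x hx. rewrite /T1. apply: le_trans (hnorm_tri hip _ _) _.
  rewrite !(hnorm_scale hip) ?subr_ge0 //.
  have h1 := hKs (A x). have h2 := hK x. have h3 := hK (Astar x). have h4 := hKs x.
  rewrite hx mulr1 in h2 h4.
  have m2 : 0 <= 2 - mu by rewrite subr_ge0.
  have e1 := le_trans h1 (ler_wpM2l K0 h2).
  have e2 := le_trans h3 (ler_wpM2l K0 h4).
  exact: lerD (ler_wpM2l hmu0 e1) (ler_wpM2l m2 e2).
have b2 : forall x, hnorm ip x = 1 -> hnorm ip (T2 x) <= K * K + K * K.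
  move=> x hx. rewrite /T2. apply: le_trans (hnorm_tri hip _ _) _.
  have h1 := hKs (A x). have h2 := hK x. have h3 := hK (Astar x). have h4 := hKs x.
  rewrite hx mulr1 in h2 h4.
  have e1 := le_trans h1 (ler_wpM2l K0 h2).
  have e2 := le_trans h3 (ler_wpM2l K0 h4).
  exact: lerD e1 e2.
have b3 : forall x, hnorm ip x = 1 -> cabs (ip (A (A x)) x) <= K * K.
  move=> x hx. apply: le_trans (cabs_ip_le hip _ _) _. rewrite hx mulr1.
  apply: le_trans (hK _) _. rewrite ler_wpM2l //. by have := hK x; rewrite hx mulr1.
have o1ge : forall x, hnorm ip x = 1 -> complex.Re (ip (T1 x) x) <= o1.
  move=> x hx. apply: le_trans (Re_ip_le hip _ _) _. rewrite hx mulr1.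
  apply: (@le_sup' _ _ (mu * (K * K) + (2 - mu) * (K * K))); last by exists x.
  by move=> s [z [hz ->]]; apply: b1.
have o2ge : forall x, hnorm ip x = 1 -> complex.Re (ip (T2 x) x) <= o2.
  move=> x hx. apply: le_trans (Re_ip_le hip _ _) _. rewrite hx mulr1.
  apply: (@le_sup' _ _ (K * K + K * K)); last by exists x.
  by move=> s [z [hz ->]]; apply: b2.
have n2ge : forall x, hnorm ip x = 1 -> cabs (ip (A (A x)) x) <= n2.
  move=> x hx. apply: (@le_sup' _ _ (K * K)); last by exists x.
  by move=> s [z [hz ->]]; apply: b3.
have o10 : 0 <= o1 by apply: sup_ge0' => r [z [_ ->]]; exact: hnorm_ge0.
have o20 : 0 <= o2 by apply: sup_ge0' => r [z [_ ->]]; exact: hnorm_ge0.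
have n20 : 0 <= n2 by apply: sup_ge0' => r [z [_ ->]]; exact: cabs_ge0.
set RHS := 4^-1 * o1 + 8^-1 * o2 + 4^-1 * n2.
have RHS0 : 0 <= RHS by rewrite /RHS; lra.
have pw : forall x, hnorm ip x = 1 -> cabs (ip (A x) x) ^+ 2 <= RHS.
  move=> x hx. apply: le_trans (pointwise hip hAstar mu hmu0 hmu2 x hx) _.
  have := o1ge x hx. have := o2ge x hx. have := n2ge x hx. rewrite /RHS /T1 /T2. lra.
have w0 : 0 <= numrad ip A by apply: sup_ge0' => r [z [_ ->]]; exact: cabs_ge0.
suff : numrad ip A <= Num.sqrt RHS.
  move=> h. rewrite -(sqr_sqrtr RHS0). rewrite ler_pXn2r ?nnegrE ?sqrtr_ge0 //.
case: (pselect (exists x : H, hnorm ip x = 1)) => [[x0 hx0]|ne].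
  apply: ge_sup; first by exists (cabs (ip (A x0) x0)), x0.
  move=> r [z [hz ->]]. apply: le_of_sq; first exact: sqrtr_ge0.
  rewrite (sqr_sqrtr RHS0). exact: pw.
rewrite /numrad sup_out ?sqrtr_ge0 //. case=> [[r [z [hz _]]] _]. by apply: ne; exists z.
Qed.
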